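(* Let $G=(V,E)$ be a $k$-uniform cored hypergraph ($k\ge3$) with Laplacian tensor $\mathcal L$. Then $\lambda=1$ is an H-eigenvalue of $\mathcal L$.
   Context: A $k$-uniform hypergraph $G=(V,E)$ has $V=[n]$ and a nonempty set $E$ of $k$-element subsets of $V$; $d_i$ is the number of edges containing $i$. $G$ is cored if every edge contains a vertex of degree one. The Laplacian tensor $\mathcal L=\mathcal D-\mathcal A$ ($\mathcal D$ diagonal with entries $d_i$, $\mathcal A$ with entries $\frac1{(k-1)!}$ at index tuples forming an edge and $0$ otherwise) satisfies $(\mathcal L\mathbf x^{k-1})_i=d_ix_i^{k-1}-\sum_{e\in E,\,i\in e}\prod_{s\in e\setminus\{i\}}x_s$. A real $\lambda$ is an H-eigenvalue if some nonzero $\mathbf x\in\mathbb R^n$ satisfies $(\mathcal L\mathbf x^{k-1})_i=\lambda x_i^{k-1}$ for all $i$. *)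

(* Defs.v *)
From HB Require Import structures.
From mathcomp Require Import all_boot all_order all_algebra.
From mathcomp Require Import reals.
Set Implicit Arguments. Unset Strict Implicit. Unset Printing Implicit Defensive.
Import Order.TTheory GRing.Theory Num.Theory.
Local Open Scope ring_scope.

Definition k_uniform_hypergraph (n k : nat) (E : {set {set 'I_n}}) : Prop :=
  E != set0 /\ (forall e, e \in E -> #|e| = k).

Definition hdeg (n : nat) (E : {set {set 'I_n}}) (i : 'I_n) : nat :=
  #|[set e in E | i \in e]|.

Definition cored (n : nat) (E : {set {set 'I_n}}) : Prop :=
  forall e, e \in E -> exists2 i, i \in e & hdeg E i = 1%N.

(* (L x^{k-1})_i = d_i x_i^{k-1} - sum_{e in E, i in e} prod_{s in e \ {i}} x_s *)
Definition laplacian_apply (R : realType) (n k : nat) (E : {set {set 'I_n}})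
    (x : 'I_n -> R) (i : 'I_n) : R :=
  (hdeg E i)%:R * x i ^+ k.-1
  - \sum_(e in E | i \in e) \prod_(s in e :\ i) x s.

Definition laplacian_H_eigenvalue (R : realType) (n k : nat)
    (E : {set {set 'I_n}}) (lambda : R) : Prop :=
  exists x : 'I_n -> R, (exists j, x j != 0) /\
    forall i, laplacian_apply k E x i = lambda * x i ^+ k.-1.

(* Main.v *)
Require Import Defs.
From HB Require Import structures.
From mathcomp Require Import all_boot all_order all_algebra.
From mathcomp Require Import reals.
From mathcomp Require Import zify.
Local Open Scope ring_scope.
Import GRing.Theory.

Theorem proposition5p5 (R : realType) (n k : nat) (E : {set {set 'I_n}}) :
  (3 <= k)%N -> k_uniform_hypergraph k E -> cored E ->
  laplacian_H_eigenvalue k E (1 : R).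
Proof.
move=> k3 [En0 Ek] Hc.
case/set0Pn: En0 => e0 He0.
have [i _ di] := Hc e0 He0.
exists (fun j => if j == i then (1:R) else 0); split.
  by exists i; rewrite eqxx oner_neq0.
move=> j; rewrite /laplacian_apply.
have -> : \sum_(e in E | j \in e) \prod_(s in e :\ j)
    (if s == i then (1:R) else 0) = 0.
  apply: big1 => e /andP [He Hj].
  have : (0 < #|e :\ j :\ i|)%N.
    have h1 := cardsD1 j e; have h2 := cardsD1 i (e :\ j).
    rewrite Ek // in h1.
    rewrite Hj in h1.
    have hb : (nat_of_bool (i \in e :\ j) <= 1)%N by case: (i \in e :\ j).
    move: h1 h2 hb k3; move: (#|e :\ j :\ i|) (#|e :\ j|) (nat_of_bool (i \in e :\ j)) => a b c /= -> -> ? ?; lia.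
  case/card_gt0P => s; rewrite !in_setD1 => /and3P [si sj se].
  rewrite (bigD1 s) /=; last by rewrite in_setD1 sj se.
  by rewrite (negbTE si) mul0r.
rewrite subr0 mul1r.
case: eqP => [->|_]; first by rewrite di mul1r.
rewrite expr0n; have -> : (k.-1 == 0%N) = false by apply/negbTE; rewrite -lt0n; lia.
by rewrite mulr0.
Qed.
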